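(* Let $X$ be a real topological vector space such that either (1) $X$ is separable and completely metrizable, or (2) $X=Y^*$ where $Y$ is a separable normed space and $X$ carries the weak* topology. If $C\subseteq X$ is nonempty and CS-closed, then $\operatorname{fri} C\neq\emptyset$.
   Context: A subset $C$ of a topological vector space is CS-closed (convergent-series closed) if whenever $x_i\in C$, $\lambda_i\ge0$ ($i\in\mathbb N$), $\sum_i\lambda_i=1$ and the series $\sum_i\lambda_i x_i$ converges in $X$, its sum belongs to $C$. For a convex set $C$, a convex subset $F\subseteq C$ is a face of $C$ if for every $x\in F$ and all $y,z\in C$ with $x\in(y,z)=\{(1-t)y+tz:t\in(0,1)\}$ we have $y,z\in F$; $F_{\min}(x,C)$ is the intersection of all faces of $C$ containing $x\in C$. The face relative interior is $\operatorname{fri} C=\{x\in C: C\subseteq\overline{F_{\min}(x,C)}\}$. *)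

(* Defs.v *)
From HB Require Import structures.
From mathcomp Require Import all_boot all_order all_algebra.
From mathcomp Require Import all_classical all_reals all_analysis.
Set Implicit Arguments. Unset Strict Implicit. Unset Printing Implicit Defensive.
Import Order.TTheory GRing.Theory Num.Theory.
Import numFieldNormedType.Exports.
Local Open Scope classical_set_scope.
Local Open Scope ring_scope.

Section Defs.
Variables (R : realType) (X : topologicalLmodType R).

Definition open_segment (y z : X) : set X :=
  [set (1 - t) *: y + t *: z | t in [set t : R | 0 < t < 1]].

Definition convex_set_of (C : set X) : Prop :=
  forall x y, C x -> C y -> forall t : R, 0 <= t <= 1 ->
    C ((1 - t) *: x + t *: y).

Definition CS_closed (C : set X) : Prop :=
  forall (x : nat -> X) (l : nat -> R),
    (forall i, C (x i)) -> (forall i, 0 <= l i) ->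
    series l @ \oo --> (1 : R) ->
    forall s : X, series (fun i => l i *: x i) @ \oo --> s -> C s.

Definition face (C F : set X) : Prop :=
  [/\ F `<=` C, convex_set_of F &
      forall x y z, F x -> C y -> C z -> open_segment y z x -> F y /\ F z].

Definition Fmin (x : X) (C : set X) : set X :=
  \bigcap_(F in [set F | face C F /\ F x]) F.

Definition fri (C : set X) : set X :=
  [set x | C x /\ C `<=` closure (Fmin x C)].

End Defs.

Definition separable (T : topologicalType) : Prop :=
  exists D : set T, countable D /\ dense D.

Definition completely_metrizable (R : realType) (T : topologicalType) : Prop :=
  exists d : T -> T -> R,
    (forall x y, 0 <= d x y) /\
    (forall x y, d x y = 0 <-> x = y) /\
    (forall x y, d x y = d y x) /\
    (forall x y z, d x z <= d x y + d y z) /\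
    (forall (x : T) (A : set T),
        nbhs x A <-> exists2 e : R, 0 < e & [set y | d x y < e] `<=` A) /\
    (forall u : nat -> T,
        (forall e : R, 0 < e -> exists N : nat, forall m n : nat,
             (N <= m)%N -> (N <= n)%N -> d (u m) (u n) < e) ->
        exists l : T, u @ \oo --> l).

(* X is (isomorphic, as a topological vector space, to) the dual Y^* of the
   normed space Y with its weak* topology: ev is a linear bijection from X
   onto the space of continuous linear functionals on Y, and the topology of
   X is the initial topology of the evaluations x |-> ev x y (y in Y). *)
Definition is_weak_star_dual (R : realType) (X : topologicalLmodType R)
    (Y : normedModType R) (ev : X -> Y -> R) : Prop :=
  (forall x, linear_for *%R (ev x) /\ continuous (ev x)) /\
  (forall (a : R) (x1 x2 : X) (y : Y),
      ev (a *: x1 + x2) y = a * ev x1 y + ev x2 y) /\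
  injective ev /\
  (forall f : Y -> R, linear_for *%R f -> continuous f ->
      exists x, ev x = f) /\
  (forall (x : X) (A : set X),
      nbhs x A <->
      exists (ys : seq Y) (e : R), 0 < e /\
        [set z | forall y, y \in ys -> `|ev z y - ev x y| < e] `<=` A).

(* Main.v *)
Require Import Defs.
From HB Require Import structures.
From mathcomp Require Import all_boot all_order all_algebra.
From mathcomp Require Import all_classical all_reals all_analysis.
From mathcomp Require Import ring lra.
Import Order.TTheory GRing.Theory Num.Theory.
Import numFieldNormedType.Exports.
Local Open Scope classical_set_scope.
Local Open Scope ring_scope.
Lemma countable_enum (T : Type) (D : set T) (t0 : T) :
  countable D -> exists e : nat -> T, D `<=` range e.
Proof.
move=> /countable_injP[f finj].
pose e n := if pselect (exists t, D t /\ f t = n) is left h then projT1 (cid h) else t0.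
exists e => t Dt; exists (f t) => //.
rewrite /e; case: pselect => [h|]; last by move=> nh; exfalso; apply: nh; exists t.
case: (cid h) => t' [Dt' ft'] /=.
by apply: finj; rewrite ?inE.
Qed.

Lemma small_inv (R : realType) (e : R) : 0 < e -> exists k : nat, k.+1%:R^-1 < e.
Proof.
move=> e0; have [k _ hk] := near_infty_natSinv_lt (PosNum e0).
by exists k; apply: hk => /=.
Qed.

Lemma small_pow (R : realType) (h e : R) : 0 <= h < 1 -> 0 < e -> exists k : nat, h ^+ k < e.
Proof.
move=> /andP[h0 h1] e0.
have hc : (fun n => h ^+ n) @ \oo --> (0:R) := @cvg_expr R h ltac:(by rewrite ger0_norm).
have [k _ hk] := cvgr_dist_lt _ _ hc _ e0.
exists k; have := hk k (leqnn k); rewrite /= sub0r normrN ger0_norm //.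
exact: exprn_ge0.
Qed.

Lemma metric_dense_seq (R : realType) (X : topologicalType) (d : X -> X -> R)
    (C : set X) (c0 : X) :
  C c0 -> separable X -> (forall x y, d x y = d y x) ->
  (forall x y z, d x z <= d x y + d y z) ->
  (forall x A, nbhs x A <-> exists2 e, 0 < e & [set y | d x y < e] `<=` A) ->
  exists c : nat -> X, (forall n, C (c n)) /\ C `<=` closure (range c).
Proof.
move=> Cc0 [D [cD dD]] dsym dtri dnb.
have [e De] := @countable_enum _ D c0 cD.
pose c2 (p : nat * nat) :=
  if pselect (exists z, C z /\ d (e p.1) z < p.2.+1%:R^-1) is left h
  then projT1 (cid h) else c0.
pose c n := if @unpickle (nat * nat)%type n is Some p then c2 p else c0.
exists c; split.
  move=> n; rewrite /c; case: unpickle => [p|//]; rewrite /c2.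
  by case: pselect => // h; case: cid => z [].
move=> z Cz B /dnb [eps eps0 hB].
have [k hk] := @small_inv R (eps/2) (divr_gt0 eps0 (ltr0Sn _ 1)).
have nb : nbhs z [set y | d z y < k.+1%:R^-1].
  by apply/dnb; exists k.+1%:R^-1.
have [y [Iy Dy]] := dD _ (ex_intro _ z (nbhs_interior nb)) (open_interior _).
have dzy : d z y < k.+1%:R^-1 := nbhs_singleton (nbhs_singleton Iy).
have [m _ ym] := De y Dy.
exists (c (pickle (m, k))); split; first by exists (pickle (m, k)).
apply: hB; rewrite /c pickleK /c2 /=.
case: pselect => [h|nh]; last first.
  by exfalso; apply: nh; exists z; split => //; rewrite ym dsym.
case: cid => w [Cw hw] /=; rewrite ym in hw.
have h1 := dtri z y w; apply: (le_lt_trans h1); rewrite [eps]splitr; apply: ltrD; apply: lt_trans hk => //.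
Qed.

Section Abs.
Variables (R : realType) (X : topologicalLmodType R).

Lemma tcvgD (T : Type) (F : set_system T) {FF : Filter F} (f g : T -> X) a b :
  f @ F --> a -> g @ F --> b -> (fun t => f t + g t) @ F --> a + b.
Proof.
move=> fa gb; apply: continuous2_cvg => //.
exact: (@add_continuous X (a, b)).
Qed.

Lemma tcvgZ (T : Type) (F : set_system T) {FF : Filter F} (s : T -> R) (f : T -> X) (k : R) (a : X) :
  s @ F --> k -> f @ F --> a -> (fun t => s t *: f t) @ F --> k *: a.
Proof.
move=> sk fa.
apply: (@continuous2_cvg _ R^o X X F FF s f (fun a b => a *: b)) => //.
exact: (@scale_continuous R X (k, a)).
Qed.

Lemma tcvgN (T : Type) (F : set_system T) {FF : Filter F} (f : T -> X) a :
  f @ F --> a -> (fun t => - f t) @ F --> - a.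
Proof. by move=> fa; apply: continuous_cvg => //; exact: opp_continuous. Qed.


Lemma series_skip (V : lmodType R) (v : nat -> V) (a : R) (n k : nat) :
  series (fun i => if i == n then 0 else a *: v i) k =
  a *: (series v k - (if (n < k)%N then v n else 0)).
Proof.
elim: k => [|k IH].
  by rewrite /series /= !big_geq // subrr scaler0.
rewrite !seriesSr IH /=.
case: (ltngtP n k) => [nk|kn|->].
- rewrite (ltn_trans nk (ltnSn k)).
  by rewrite -scalerDr addrAC.
- by rewrite ltnNge kn /= !subr0 scalerDr.
- by rewrite ltnSn subr0 addr0 addrK.
Qed.

Lemma series0 (V : zmodType) (u : nat -> V) : series u 0 = 0.
Proof. by rewrite /series /= big_geq. Qed.

Lemma abstract_fri (C : set X) (c : nat -> X) (mu : nat -> R) (M : R) (s : X) :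
  CS_closed C -> (forall n, C (c n)) -> (forall n, 0 < mu n) ->
  series mu @ \oo --> M -> series (fun i => mu i *: c i) @ \oo --> s ->
  C `<=` closure (range c) -> fri C !=set0.
Proof.
move=> CS Cc mu0 hM hs dense.
have nd : nondecreasing_seq (series mu).
  by apply/nondecreasing_seqP => n; rewrite seriesSr lerDl ltW.
have leM n : series mu n <= M.
  rewrite -(cvg_lim _ hM) //; apply: nondecreasing_cvgn_le => //.
  by apply/cvg_ex; exists M.
have s0 n : 0 <= series mu n.
  by rewrite /series /=; apply: sumr_ge0 => i _; apply: ltW.
have Mpos : 0 < M.
  have := leM 1%N; rewrite seriesSr series0 add0r; apply: lt_le_trans; exact: mu0.
have muM n : mu n < M.
  have := leM n.+2; rewrite !seriesSr => h.
  have := s0 n; have := mu0 n.+1; lra.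
pose lam i := mu i / M.
have lam0 n : 0 < lam n by apply: divr_gt0.
have lam1 n : lam n < 1 by rewrite ltr_pdivrMr // mul1r.
have serlam : series lam @ \oo --> (1:R).
  have -> : series lam = (fun n => series mu n * M^-1).
    by apply: funext => n; rewrite /series /= mulr_suml.
  rewrite -(mulfV (lt0r_neq0 Mpos)); exact: cvgMr_tmp.
pose x := M^-1 *: s.
have serx : series (fun i => lam i *: c i) @ \oo --> x.
  have -> : series (fun i => lam i *: c i) =
      (fun n => M^-1 *: series (fun i => mu i *: c i) n).
    apply: funext => n; rewrite /series /= scaler_sumr; apply: eq_bigr => i _.
    by rewrite scalerA mulrC.
  by apply: tcvgZ => //; exact: cvg_cst.
have Cx : C x := CS c lam Cc (fun i => ltW (lam0 i)) serlam x serx.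
exists x; split => //.
apply: subset_trans dense _; apply: closureS.
move=> _ [n _ <-] F [hF Fx].
pose a := (1 - lam n)^-1.
have ln1 : 1 - lam n != 0 by rewrite subr_eq0 eq_sym lt_eqF.
pose y := a *: (x - lam n *: c n).
have Cy : C y.
  apply: (CS c (fun i => if i == n then 0 else a * lam i)) => //.
  - move=> i; case: ifP => // _; apply: mulr_ge0; last exact: ltW.
    by rewrite invr_ge0 subr_ge0 ltW.
  - rewrite (_ : series _ = fun k => a * (series lam k - (if (n < k)%N then lam n else 0))); last first.
      by apply: funext => k; exact: (@series_skip R^o lam a n k).
    have -> : (1:R) = a * (1 - lam n) by rewrite mulVf.
    have h : (fun k => a * (series lam k - lam n)) @ \oo --> a * (1 - lam n).
      apply: cvgMl_tmp; apply: cvgB => //; exact: cvg_cst.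
    apply: cvg_trans h; apply: near_eq_cvg; near=> k.
    rewrite ifT //; near: k; exists n.+1 => //.
  - rewrite (_ : series _ = fun k => a *: (series (fun i => lam i *: c i) k -
        (if (n < k)%N then lam n *: c n else 0))); last first.
      apply: funext => k; rewrite -series_skip; congr series; apply: funext => i.
      by case: ifP => _; rewrite ?scale0r ?scalerA.
    have h : (fun k => a *: (series (fun i => lam i *: c i) k - lam n *: c n)) @ \oo --> y.
      apply: tcvgZ; first exact: cvg_cst.
      apply: tcvgD => //; exact: cvg_cst.
    apply: cvg_trans h; apply: near_eq_cvg; near=> k.
    rewrite ifT //; near: k; exists n.+1 => //.
have seg : open_segment (c n) y x.
  exists (1 - lam n); first by rewrite /= subr_gt0 lam1 ltrBlDr ltrDl lam0.
  rewrite /y scalerA mulfV // scale1r (_ : 1 - (1 - lam n) = lam n); last by ring.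
  by rewrite addrC subrK.
by case: hF => _ _ ext; have [] := ext x (c n) y Fx (Cc n) Cy seg.
Unshelve. all: by end_near.
Qed.

Lemma step_exists (d : X -> X -> R)
  (dnb : forall x A, nbhs x A <-> exists2 e, 0 < e & [set y | d x y < e] `<=` A)
  (p v : X) (eps : R) : 0 < eps -> exists t : R, (0 < t <= eps) /\ d p (p + t *: v) < eps.
Proof.
move=> eps0.
have cont : (fun t : R => p + t *: v) @ (0:R) --> p.
  rewrite -[X in _ --> X]addr0 -[X in _ + X](scale0r v).
  apply: tcvgD; first exact: cvg_cst.
  apply: tcvgZ; [exact: cvg_id | exact: cvg_cst].
have nb : nbhs p [set y | d p y < eps] by apply/dnb; exists eps.
have /nbhs_ballP [del del0 hdel] := cont _ nb.
exists (Num.min (del / 2) eps); split.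
  by rewrite lt_min ge_min lexx orbT andbT divr_gt0.
apply: hdel; rewrite /ball /= sub0r normrN ger0_norm; last first.
  rewrite le_min ltW ?divr_gt0 //=; exact: ltW.
rewrite gt_min; apply/orP; left; rewrite ltr_pdivrMr // ltr_pMr //.
by rewrite ltr1n.
Qed.

Lemma metric_series (d : X -> X -> R) (c : nat -> X) :
  (forall x y, 0 <= d x y) -> (forall x, d x x = 0) -> (forall x y, d x y = d y x) ->
  (forall x y z, d x z <= d x y + d y z) ->
  (forall x A, nbhs x A <-> exists2 e, 0 < e & [set y | d x y < e] `<=` A) ->
  (forall u : nat -> X,
        (forall e : R, 0 < e -> exists N : nat, forall m n : nat,
             (N <= m)%N -> (N <= n)%N -> d (u m) (u n) < e) ->
        exists l : X, u @ \oo --> l) ->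
  exists (mu : nat -> R) (M : R) (s : X), (forall n, 0 < mu n) /\
    series mu @ \oo --> M /\ series (fun i => mu i *: c i) @ \oo --> s.
Proof.
move=> d0 dxx dsym dtri dnb dcomp.
pose h : R := 2^-1.
have h0 : 0 < h by rewrite invr_gt0.
have h1 : h < 1 by rewrite invf_lt1 // ltr1n.
have hn0 n : 0 < h ^+ n by apply: exprn_gt0.
have step (p : X) (n : nat) : {t : R | (0 < t <= h ^+ n) /\ d p (p + t *: c n) < h ^+ n}.
  by apply: cid; apply: step_exists.
pose tt p n := projT1 (step p n).
pose T := fix T (n : nat) : X := match n with 0%N => 0 | n'.+1 => T n' + tt (T n') n' *: c n' end.
pose mu n := tt (T n) n.
have Teq n : T n = series (fun i => mu i *: c i) n.
  elim: n => [|n IH]; first by rewrite series0.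
  by rewrite seriesSr -IH.
have mupos n : 0 < mu n /\ mu n <= h ^+ n.
  by rewrite /mu /tt; move: (projT2 (step (T n) n)) => [/andP[]]...
have dstep n : d (T n) (T n.+1) < h ^+ n.
  by rewrite /= /mu /tt; move: (projT2 (step (T n) n)) => [_].
have dbound m j : d (T m) (T (j + m)) <= 2 * h ^+ m - 2 * h ^+ (j + m).
  elim: j => [|j IH]; first by rewrite add0n subrr dxx.
  have e : 2 * (h * h ^+ (j + m)) = h ^+ (j + m) by rewrite mulrA mulfV ?mul1r.
  rewrite addSn exprS e (le_trans (dtri _ (T (j + m)) _)) //.
  have := dstep (j + m); lra.
have dle m n : (m <= n)%N -> d (T m) (T n) <= 2 * h ^+ m.
  move=> mn; rewrite -(subnK mn); apply: (le_trans (dbound m (n - m)%N)).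
  by rewrite lerBlDr lerDl mulr_ge0 // ltW.
have cauchy : forall e : R, 0 < e -> exists N : nat, forall m n : nat,
    (N <= m)%N -> (N <= n)%N -> d (T m) (T n) < e.
  move=> e e0; have [N hN] := @small_pow R h (e / 2) ltac:(by rewrite ltW) (divr_gt0 e0 (ltr0Sn _ 1)).
  have key m : (N <= m)%N -> 2 * h ^+ m < e.
    move=> Nm; have : h ^+ m <= h ^+ N by apply: ler_wiXn2l => //; [exact: ltW | exact: ltW].
    move: hN; lra.
  exists N => m n Nm Nn; case: (leqP m n) => [mn|/ltnW nm].
    exact: le_lt_trans (dle _ _ mn) (key _ Nm).
  by rewrite dsym; exact: le_lt_trans (dle _ _ nm) (key _ Nn).
have [l hl] := dcomp T cauchy.
have sbound n : series mu n <= 2 - 2 * h ^+ n.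
  elim: n => [|n IH]; first by rewrite series0 expr0; lra.
  have e : 2 * (h * h ^+ n) = h ^+ n by rewrite mulrA mulfV ?mul1r.
  rewrite seriesSr exprS e; have := (mupos n).2; lra.
have nd : nondecreasing_seq (series mu).
  by apply/nondecreasing_seqP => n; rewrite seriesSr lerDl ltW // (mupos n).1.
have cv : cvgn (series mu).
  apply: nondecreasing_is_cvgn => //; exists 2 => _ [n _ <-].
  apply: (le_trans (sbound n)); have := hn0 n; lra.
move/cvg_ex: cv => [M hM].
exists mu, M, l; split; first by move=> n; exact: (mupos n).1.
split => //.
by rewrite -(funext Teq).
Qed.
End Abs.
Lemma lim_norm_le (R : realType) (u : nat -> R) (l B : R) :
  u @ \oo --> l -> (forall n, `|u n| <= B) -> `|l| <= B.
Proof.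
move=> ul ub; rewrite leNgt; apply/negP => lB.
have lB0 : 0 < `|l| - B by rewrite subr_gt0.
have [N _ hN] := cvgr_dist_lt _ _ ul _ lB0.
have := hN N (leqnn N); have := ub N; have := ler_distD (u N) l 0.
rewrite !subr0; lra.
Qed.

Lemma lin_facts (R : realType) (Y : normedModType R) (f : Y -> R) :
  linear_for *%R f ->
  [/\ f 0 = 0, (forall a u, f (a *: u) = a * f u) & (forall u v, f (u - v) = f u - f v)].
Proof.
move=> hf.
have f0 : f 0 = 0.
  have := hf 1 0 0; rewrite scale1r addr0 mul1r => /eqP.
  by move=> /eqP h; have := h; lra.
split => //.
  by move=> a u; have := hf a u 0; rewrite !addr0 f0 addr0.
move=> u v; have := hf (-1) v u; rewrite scaleN1r [- v + u]addrC => ->.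
by rewrite mulN1r addrC.
Qed.

Lemma lin_bound (R : realType) (Y : normedModType R) (f : Y -> R) :
  linear_for *%R f -> continuous f ->
  exists K, 0 < K /\ forall y, `|f y| <= K * `|y|.
Proof.
move=> hf fc; have [f0 fZ fB] := lin_facts _ _ _ hf.
have h0 : f @ (0 : Y) --> (0 : R) by rewrite -f0; exact: fc.
have := @cvgr_dist_lt _ _ _ (nbhs (0:Y)) _ f 0 h0 1 ltr01; move=> H.
have [del /= del0 hdel] := (nbhs_norm0P).1 (H _).
exists (2 / del); split; first by rewrite divr_gt0.
move=> y; have [->|y0] := eqVneq y 0; first by rewrite f0 !normr0 mulr0.
have ny0 : 0 < `|y| by rewrite normr_gt0.
pose t := del / (2 * `|y|).
have t0 : 0 < t by rewrite divr_gt0 // mulr_gt0.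
have := hdel (t *: y); rewrite /= normrZ gtr0_norm // sub0r normrN fZ normrM gtr0_norm //.
have -> : t * `|y| = del / 2 by rewrite /t invfM mulrA mulrAC mulfK ?lt0r_neq0.
move=> /(_ ltac:(by rewrite ltr_pdivrMr // ltr_pMr // ltr1n)) ht.
have e : `|f y| = t^-1 * (t * `|f y|) by rewrite mulrA mulVf ?mul1r ?lt0r_neq0.
rewrite e; have -> : 2 / del * `|y| = t^-1 * 1.
  by rewrite /t invf_div mulr1 mulrAC.
rewrite ler_pM2l ?invr_gt0 //; exact: ltW.
Qed.

Lemma geom_le2 (R : realType) (n : nat) :
  series (fun k => (2^-1 : R) ^+ k) n <= 2 - 2 * (2^-1)^+n.
Proof.
elim: n => [|n IH]; first by rewrite series0 expr0; lra.
have e : 2 * ((2^-1 : R) * (2^-1) ^+ n) = (2^-1) ^+ n by rewrite mulrA mulfV ?mul1r.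
rewrite seriesSr exprS e; lra.
Qed.

Lemma geom_le2' (R : realType) (n : nat) :
  series (fun k => (2^-1 : R) ^+ k) n <= 2.
Proof.
apply: (le_trans (geom_le2 R n)); have : 0 < (2^-1 : R) ^+ n.
  by apply: exprn_gt0; rewrite invr_gt0.
lra.
Qed.

Lemma weak_series (R : realType) (X : topologicalLmodType R) (Y : normedModType R)
    (ev : X -> Y -> R) (c : nat -> X) :
  is_weak_star_dual ev ->
  exists (mu : nat -> R) (M : R) (s : X), (forall n, 0 < mu n) /\
    series mu @ \oo --> M /\ series (fun i => mu i *: c i) @ \oo --> s.
Proof.
move=> [evlin [evadd [_ [evsurj evnb]]]].
have Kex n : exists K : R, 1 <= K /\ forall y, `|ev (c n) y| <= K * `|y|.
  have [K [K0 hK]] := lin_bound _ _ _ (evlin (c n)).1 (evlin (c n)).2.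
  exists (K + 1); split; first by rewrite lerDr ltW.
  move=> y; apply: (le_trans (hK y)); rewrite ler_wpM2r // lerDl //.
pose K n := projT1 (cid (Kex n)).
have K1 n : 1 <= K n by rewrite /K; case: cid => k [].
have Kb n y : `|ev (c n) y| <= K n * `|y| by rewrite /K; case: cid => k [].
pose h : R := 2^-1.
have h0 : 0 < h by rewrite invr_gt0.
have hn0 n : 0 < h ^+ n by apply: exprn_gt0.
pose mu n := h ^+ n / K n.
have Kpos n : 0 < K n by apply: lt_le_trans (K1 n).
have mu0 n : 0 < mu n by apply: divr_gt0.
have muh n : mu n <= h ^+ n by rewrite ler_pdivrMr // ler_pMr.
have muK n : mu n * K n = h ^+ n by rewrite divfK // lt0r_neq0.
pose u y n := mu n * ev (c n) y.
have ub y n : `|u y n| <= h ^+ n * `|y|.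
  by rewrite normrM gtr0_norm // -muK -mulrA ler_wpM2l // ltW.
have ucv y : cvgn (series (u y)).
  apply: normed_cvg.
  apply: (@series_le_cvg R _ (geometric `|y| h)).
  - by move=> n; rewrite normr_ge0.
  - by move=> n; apply: geometric_ge0 => //; exact: ltW.
  - by move=> n; rewrite /geometric /= mulrC.
  by apply: is_cvg_geometric_series; rewrite gtr0_norm // invf_lt1 // ltr1n.
pose f y := limn (series (u y)).
have hf y : series (u y) @ \oo --> f y := ucv y.
have flin : linear_for *%R f.
  move=> a y1 y2; rewrite /f; apply: cvg_lim => //.
  have -> : series (u (a *: y1 + y2)) = (fun n => a * series (u y1) n + series (u y2) n).
    apply: funext => n; rewrite /series /= big_distrr -big_split /=; apply: eq_bigr => i _.
    by rewrite /u (evlin (c i)).1 mulrDr mulrCA.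
  apply: cvgD; last exact: hf.
  exact: cvgMl_tmp.
have [f0 fZ fB] := lin_facts _ _ _ flin.
have fbound y : `|f y| <= 2 * `|y|.
  apply: (lim_norm_le _ _ _ _ (hf y)) => n.
  rewrite /series /=; apply: (le_trans (ler_norm_sum _ _ _)).
  apply: (@le_trans _ _ (\sum_(0 <= k < n) h ^+ k * `|y|)); first by apply: ler_sum => k _; exact: ub.
  rewrite -mulr_suml ler_wpM2r //; exact: geom_le2'.
have fcont : continuous f.
  move=> y0; apply/cvgrPdist_lt => eps eps0.
  have e2 : 0 < eps / 2 by rewrite divr_gt0.
  have := @cvgr_dist_lt _ _ _ (nbhs y0) _ id y0 cvg_id _ e2 => H.
  apply: filterS (H _) => y /= hy.
  rewrite -normrN opprB -fB; apply: (le_lt_trans (fbound _)).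
  by rewrite distrC -ltr_pdivlMl // mulrC.
have [x evx] := evsurj f flin fcont.
pose S n := series (fun i => mu i *: c i) n.
have ev0 y : ev 0 y = 0.
  have := evadd 1 0 0 y; rewrite scale1r addr0 mul1r => /eqP.
  by move=> h1; have := h1; lra.
have evS n y : ev (S n) y = series (u y) n.
  elim: n => [|n IH]; first by rewrite /S !series0 ev0.
  by rewrite /S !seriesSr addrC evadd -/(S n) IH addrC.
have nd : nondecreasing_seq (series mu).
  by apply/nondecreasing_seqP => n; rewrite seriesSr lerDl ltW.
have cv : cvgn (series mu).
  apply: nondecreasing_is_cvgn => //; exists 2 => _ [n _ <-].
  apply: (le_trans _ (geom_le2' R n)); apply: ler_sum => k _; exact: muh.
move/cvg_ex: cv => [M hM].
exists mu, M, x; split => //; split => //.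
move=> A /evnb [ys [e [e0 sub]]].
suff : \forall n \near \oo, forall y, y \in ys -> `|ev (S n) y - ev x y| < e.
  by apply: filterS => n hn; apply: sub.
elim: ys {sub} => [|y ys IH]; first by apply: nearW => n y; rewrite in_nil.
have Hy : \forall n \near \oo, `|ev (S n) y - ev x y| < e.
  have H := @cvgr_dist_lt _ _ _ \oo _ _ _ (hf y) _ e0.
  apply: filterS (H _) => n.
  by rewrite evS evx distrC.
apply: filterS2 Hy IH => n h1 h2 y'; rewrite in_cons => /orP[/eqP->|]; last exact: h2.
exact: h1.
Qed.

Lemma floor_near (R : realType) (t : R) : `|t - (Num.floor t)%:~R| < 1.
Proof.
have h1 := floor_le t; have h2 := floorD1_gt t; rewrite intrD in h2.
rewrite ger0_norm; last by rewrite subr_ge0.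
lra.
Qed.

Lemma weak_dense_seq (R : realType) (X : topologicalLmodType R) (Y : normedModType R)
    (ev : X -> Y -> R) (C : set X) (c0 : X) :
  C c0 -> separable Y -> is_weak_star_dual ev ->
  exists c : nat -> X, (forall n, C (c n)) /\ C `<=` closure (range c).
Proof.
move=> Cc0 [D [cD dD]] [evlin [evadd [_ [_ evnb]]]].
have [dd Ddd] := @countable_enum _ D 0 cD.
pose P (i : nat * nat * seq (nat * int)) (z : X) :=
  C z /\ (forall y, `|ev z y| <= i.1.1%:R * `|y|) /\
  (forall p, p \in i.2 -> `|i.1.2.+1%:R * ev z (dd p.1) - p.2%:~R| < 1).
pose c2 i := if pselect (exists z, P i z) is left h then projT1 (cid h) else c0.
pose c n := if @unpickle (nat * nat * seq (nat * int))%type n is Some i then c2 i else c0.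
exists c; split.
  move=> n; rewrite /c; case: unpickle => [i|//]; rewrite /c2.
  by case: pselect => // h; case: cid => z [].
move=> g Cg B /evnb [ys [e [e0 sub]]].
have [Kg [Kg0 Kgb]] := lin_bound _ _ _ (evlin g).1 (evlin g).2.
pose k := Num.Def.archi_bound Kg.
have Kgk : Kg < k%:R := archi_boundP (ltW Kg0).
have e4 : 0 < e / 4 by rewrite divr_gt0.
have [m hm] := @small_inv R (e / 4) e4.
have k1 : 0 < k.+1%:R :> R by rewrite ltr0Sn.
pose eta := e / (4 * k.+1%:R).
have eta0 : 0 < eta by rewrite divr_gt0 // mulr_gt0.
have jex y : exists j, `|y - dd j| < eta.
  have nb := nbhsx_ballx y eta eta0.
  have [z [Iz Dz]] := dD _ (ex_intro _ y (nbhs_interior nb)) (open_interior _).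
  have [j _ jz] := Ddd z Dz.
  exists j; rewrite jz; have := nbhs_singleton (nbhs_singleton Iz).
  by rewrite -ball_normE.
pose jf y := projT1 (cid (jex y)).
have hjf y : `|y - dd (jf y)| < eta by rewrite /jf; case: cid.
pose q y := Num.floor (m.+1%:R * ev g (dd (jf y))).
pose L := map (fun y => (jf y, q y)) ys.
pose i := (k, m, L).
have Pg : P i g.
  split => //; split.
    move=> y; apply: (le_trans (Kgb y)); apply: ler_wpM2r => //; exact: ltW.
  move=> p /mapP [y yin ->] /=; exact: floor_near.
have [Cw [wb wq]] : P i (c2 i).
  rewrite /c2; case: pselect => [h|nh]; first by case: cid.
  by exfalso; apply: nh; exists g.
exists (c (pickle i)); split; first by exists (pickle i).
rewrite /c pickleK; apply: sub => y yin.
set w := c2 i.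
set dj := dd (jf y).
have hj : `|y - dj| < eta := hjf y.
have hw : `|m.+1%:R * ev w dj - (q y)%:~R| < 1.
  exact: (wq (jf y, q y) (map_f (fun y => (jf y, q y)) yin)).
have hg : `|m.+1%:R * ev g dj - (q y)%:~R| < 1 := floor_near _ _.
have [w0 wZ wB] := lin_facts _ _ _ (evlin w).1.
have [g0 gZ gB] := lin_facts _ _ _ (evlin g).1.
have ny0 : 0 <= `|y - dj| by [].
have b1 : `|ev w y - ev w dj| <= k%:R * eta.
  rewrite -wB; apply: (le_trans (wb _)); apply: ler_wpM2l => //; exact: ltW.
have b3 : `|ev g y - ev g dj| <= k%:R * eta.
  rewrite -gB; apply: (le_trans (Kgb _)); apply: (@le_trans _ _ (k%:R * `|y - dj|)).
    by apply: ler_wpM2r => //; exact: ltW.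
  by apply: ler_wpM2l => //; exact: ltW.
pose Mm : R := m.+1%:R.
have Mm0 : 0 < Mm by rewrite ltr0Sn.
have b2 : Mm * `|ev w dj - ev g dj| < 2.
  rewrite -[Mm]ger0_norm ?ltW // -normrM mulrBr.
  have -> : Mm * ev w dj - Mm * ev g dj =
    (Mm * ev w dj - (q y)%:~R) - (Mm * ev g dj - (q y)%:~R) by ring.
  apply: (le_lt_trans (ler_normB _ _)); move: hw hg; rewrite -/Mm; lra.
have hm' : 1 < Mm * (e / 4).
  by move: hm; rewrite -(ltr_pM2l Mm0) mulfV ?lt0r_neq0.
have b2' : `|ev w dj - ev g dj| < e / 2.
  rewrite -(ltr_pM2l Mm0).
  have -> : Mm * (e / 2) = 2 * (Mm * (e / 4)) by field.
  lra.
have keta : k%:R * eta < e / 4.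
  have -> : k%:R * eta = e / 4 * (k%:R / k.+1%:R).
    by rewrite /eta; field; rewrite lt0r_neq0.
  rewrite gtr_pMr // ltr_pdivrMr // mul1r ltr_nat //.
have -> : ev w y - ev g y =
    (ev w y - ev w dj) + (ev w dj - ev g dj) + (ev g dj - ev g y) by ring.
apply: (le_lt_trans (ler_normD _ _)).
have := ler_normD (ev w y - ev w dj) (ev w dj - ev g dj).
rewrite (distrC (ev g dj)).
lra.
Qed.

Theorem theorem3p2 (R : realType) (X : topologicalLmodType R) :
  ((separable X /\ completely_metrizable R X) \/
   (exists (Y : normedModType R) (ev : X -> Y -> R),
      separable Y /\ is_weak_star_dual ev)) ->
  forall C : set X, C !=set0 -> CS_closed C -> fri C !=set0.
Proof.
move=> [[sep [d [d0 [deq [dsym [dtri [dnb dcomp]]]]]]] | [Y [ev [sepY ws]]]] C [c0 Cc0] CS.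
  have [c [Cc dense]] := @metric_dense_seq R X d C c0 Cc0 sep dsym dtri dnb.
  have dxx x : d x x = 0 by apply/deq.
  have [mu [M [s [mu0 [hM hs]]]]] := @metric_series R X d c d0 dxx dsym dtri dnb dcomp.
  exact: (@abstract_fri R X C c mu M s CS Cc mu0 hM hs dense).
have [c [Cc dense]] := @weak_dense_seq R X Y ev C c0 Cc0 sepY ws.
have [mu [M [s [mu0 [hM hs]]]]] := @weak_series R X Y ev c ws.
exact: (@abstract_fri R X C c mu M s CS Cc mu0 hM hs dense).
Qed.
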